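(* Let $a,b,c$ be positive numbers with $a<b<c$, $\lfloor c/b\rfloor\ge2$, $b-a<c_0<a$ and $0\le c_1\le2a-b$, where $c_0=c-\lfloor c/b\rfloor b$ and $c_1=c-c_0-\lfloor(c-c_0)/a\rfloor a$. Suppose $\mathcal S_{a,b,c}\ne\emptyset$ and either $a/b\notin\mathbb Q$, or $a/b=p/q$ and $c\in(b/q)\mathbb Z$ for some coprime positive integers $p,q$. Then $$\Big(\big(\mathcal S_{a,b,c}\cap([0,c_0+a-b)+a\mathbb Z)\big)+\lfloor c/b\rfloor b\Big)\cup\bigcup_{k=0}^{\lfloor c/b\rfloor-1}(\mathcal S_{a,b,c}+kb)=\mathbb R.$$
   Context: For $a,b,c>0$ and $t\in\mathbb R$, $\mathbf M_{a,b,c}(t)=(\chi_{[0,c)}(t-\mu+\lambda))_{\mu\in a\mathbb Z,\lambda\in b\mathbb Z}$ is the infinite matrix with rows indexed by $a\mathbb Z$ and columns by $b\mathbb Z$, acting by $(\mathbf M_{a,b,c}(t)\mathbf x)(\mu)=\sum_{\lambda\in b\mathbb Z}\chi_{[0,c)}(t-\mu+\lambda)\mathbf x(\lambda)$. $\mathcal B_b^0$ is the set of vectors $(\mathbf x(\lambda))_{\lambda\in b\mathbb Z}$ with entries in $\{0,1\}$ and $\mathbf x(0)=1$. $\mathbf 1$ denotes the vector indexed by $a\mathbb Z$ with all entries $1$. $\mathcal S_{a,b,c}=\{t:\mathbf M_{a,b,c}(t)\mathbf x=\mathbf 1\text{ for some }\mathbf x\in\mathcal B_b^0\}$. For $A\subset\mathbb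 R$, $A+r=\{x+r:x\in A\}$ and $A+a\mathbb Z=\{x+ak:x\in A,k\in\mathbb Z\}$. *)

(* Defs.v *)
From Stdlib Require Import Reals ZArith.
Open Scope R_scope.

Definition in_co (c s : R) : Prop := 0 <= s < c.

(* floor function on R (Int_part r = up r - 1 = floor r). *)
Definition floorR (r : R) : Z := Int_part r.

(* A vector x in B_b^0: indexed by lambda = b*n (n : Z), entries in {0,1}
   encoded as bool, with x(0) = 1. *)
Definition in_B0 (x : Z -> bool) : Prop := x 0%Z = true.

(* (M_{a,b,c}(t) x)(mu) for mu = a*m is the sum over n : Z of
   chi_[0,c)(t - a m + b n) * x(b n). All terms are 0 or 1, so this sum
   equals 1 iff exactly one index n gives a term equal to 1. *)
Definition Mx_eq_one_at (a b c t : R) (x : Z -> bool) (m : Z) : Prop :=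
  exists n : Z,
    (x n = true /\ in_co c (t - a * IZR m + b * IZR n)) /\
    forall n' : Z, x n' = true -> in_co c (t - a * IZR m + b * IZR n') -> n' = n.

Definition Mx_eq_one (a b c t : R) (x : Z -> bool) : Prop :=
  forall m : Z, Mx_eq_one_at a b c t x m.

Definition S_abc (a b c t : R) : Prop :=
  exists x : Z -> bool, in_B0 x /\ Mx_eq_one a b c t x.

(* Main.v *)
Require Import Defs.
From Stdlib Require Import Reals ZArith Lra Lia Psatz ClassicalEpsilon Classical.
Open Scope R_scope.

Lemma ip_spec (r : R) : IZR (Int_part r) <= r < IZR (Int_part r) + 1.
Proof. destruct (base_Int_part r). lra. Qed.

Lemma S_shift_a a b c t j : S_abc a b c t -> S_abc a b c (t + a * IZR j).
Proof.
  intros [x [H0 H]]. exists x. split; auto. intro m.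
  destruct (H (m - j)%Z) as [n [[Hx Hi] Hu]]. exists n.
  assert (E : forall n, t + a * IZR j - a * IZR m + b * IZR n = t - a * IZR (m - j) + b * IZR n)
    by (intro; rewrite minus_IZR; ring).
  split; [split|]; [auto| rewrite E; auto |].
  intros n' Hx' Hi'. rewrite E in Hi'. auto.
Qed.

Lemma S_shift_b a b c t x n1 : in_B0 x -> Mx_eq_one a b c t x -> x n1 = true ->
  S_abc a b c (t + b * IZR n1).
Proof.
  intros H0 H Hn1. exists (fun n => x (n + n1)%Z). split.
  - unfold in_B0. simpl. exact Hn1.
  - intro m. destruct (H m) as [n [[Hx Hi] Hu]]. exists (n - n1)%Z.
    assert (E : forall n', t + b * IZR n1 - a * IZR m + b * IZR n' = t - a * IZR m + b * IZR (n' + n1))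
      by (intro; rewrite plus_IZR; ring).
    split; [split|].
    + replace (n - n1 + n1)%Z with n by lia. auto.
    + rewrite E. replace (n - n1 + n1)%Z with n by lia. auto.
    + intros n' Hx' Hi'. rewrite E in Hi'. specialize (Hu _ Hx' Hi'). lia.
Qed.

Lemma IZR_lt_plus1 (u v : Z) : IZR u < IZR v + 1 -> (u <= v)%Z.
Proof. intro H. rewrite <- plus_IZR in H. apply lt_IZR in H. lia. Qed.

Lemma step a b c N t x n :
  0 < a -> a < b -> b < c ->
  IZR N * b <= c < (IZR N + 1) * b -> c - IZR N * b < a ->
  in_B0 x -> Mx_eq_one a b c t x ->
  exists n1, x n1 = true /\ (0 <= n - n1 <= N)%Z /\
    ((n - n1 = N)%Z -> exists s j, 0 <= s < (c - IZR N * b) + a - b /\ t + b * IZR n1 = s + a * IZR j).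
Proof.
  intros Ha Hab Hbc [HN1 HN2] Hc0a H0 H.
  set (m := (Int_part ((t + b * IZR n - c) / a) + 1)%Z).
  assert (Hm : a * IZR m - a <= t + b * IZR n - c < a * IZR m).
  { unfold m. rewrite plus_IZR. destruct (ip_spec ((t + b * IZR n - c) / a)) as [A B].
    set (k := IZR (Int_part ((t + b * IZR n - c) / a))) in *.
    apply Rmult_le_compat_l with (r := a) in A; [|lra].
    apply Rmult_lt_compat_l with (r := a) in B; [|lra].
    field_simplify in A; field_simplify in B; try lra. }
  destruct (H m) as [n1 [[Hx1 [Hi1 Hi1']] Hu1]].
  exists n1. split; auto.
  assert (Hle : (n1 <= n)%Z).
  { apply IZR_lt_plus1. assert (b * IZR n1 < b * (IZR n + 1)) by lra.
    apply Rmult_lt_reg_l in H1; lra. }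
  assert (Hge : (n - n1 <= N)%Z).
  { apply IZR_lt_plus1. rewrite minus_IZR.
    assert (b * (IZR n - IZR n1) < b * (IZR N + 1)) by nra.
    apply Rmult_lt_reg_l in H1; lra. }
  split; [lia|].
  intros HnN. exists (t - a * IZR m + b * IZR n1), m. split; [|ring].
  assert (En : IZR n = IZR n1 + IZR N) by (rewrite <- plus_IZR; replace (n1 + N)%Z with n by lia; reflexivity).
  assert (Ebn : b * IZR n = b * IZR n1 + IZR N * b) by (rewrite En; ring).
  split; [lra|].
  assert (Hrc0 : t - a * IZR m + b * IZR n1 < c - IZR N * b) by lra.
  destruct (Rlt_or_le (t - a * IZR m + b * IZR n1) (c - IZR N * b + a - b)) as [Hr|Hr]; [exact Hr|].
  exfalso.
  destruct (H (m + 1)%Z) as [n2 [[Hx2 [Hi2 Hi2']] Hu2]].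
  rewrite plus_IZR, Rmult_plus_distr_l, Rmult_1_r in Hi2, Hi2'.
  assert (Hc : c <= t - a * IZR m + b * IZR n2).
  { destruct (Rlt_or_le (t - a * IZR m + b * IZR n2) c) as [Hl|Hl]; auto.
    assert (n2 = n1). { apply Hu1. exact Hx2. unfold in_co. split. lra. exact Hl. } subst n2. lra. }
  assert (A1 : (n2 - n1 >= N + 1)%Z).
  { assert (IZR N < IZR (n2 - n1)).
    { rewrite minus_IZR. assert (b * IZR N < b * (IZR n2 - IZR n1)) by lra.
      apply Rmult_lt_reg_l in H1; lra. }
    apply lt_IZR in H1. lia. }
  assert (A2 : (n2 - n1 < N + 1)%Z).
  { apply lt_IZR. rewrite minus_IZR, plus_IZR.
    assert (b * (IZR n2 - IZR n1) < b * (IZR N + 1)) by lra.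
    apply Rmult_lt_reg_l in H1; lra. }
  lia.
Qed.



Lemma ip_unique (r : R) (z : Z) : IZR z <= r < IZR z + 1 -> Int_part r = z.
Proof.
  intros [A B]. destruct (ip_spec r) as [C D].
  assert (z <= Int_part r)%Z by (apply IZR_lt_plus1; lra).
  assert (Int_part r <= z)%Z by (apply IZR_lt_plus1; lra). lia.
Qed.

Lemma ip_shift (r : R) (z : Z) : Int_part (r - IZR z) = (Int_part r - z)%Z.
Proof.
  apply ip_unique. rewrite minus_IZR. destruct (ip_spec r). lra.
Qed.

Lemma inco_cell (d t : R) (k z : Z) : 0 < d ->
  in_co (IZR k * d) (t - d * IZR z) <-> (z <= Int_part (t / d) < z + k)%Z.
Proof.
  intro Hd. destruct (ip_spec (t / d)) as [A B].
  set (I := Int_part (t / d)) in *.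
  assert (Et : t = (t / d) * d) by (field; lra).
  unfold in_co. split.
  - intros [C D]. split.
    + apply IZR_lt_plus1.
      assert (IZR z * d <= (t/d) * d) by lra.
      apply Rmult_le_reg_r in H; lra.
    + apply lt_IZR. rewrite plus_IZR.
      assert ((t/d) * d < (IZR z + IZR k) * d) by lra.
      apply Rmult_lt_reg_r in H; lra.
  - intros [C D].
    assert (IZR I + 1 <= IZR z + IZR k).
    { rewrite <- plus_IZR, <- plus_IZR. apply IZR_le. lia. }
    apply IZR_le in C.
    split.
    + assert (IZR z * d <= (t/d) * d) by (apply Rmult_le_compat_r; lra). lra.
    + assert ((t/d) * d < (IZR z + IZR k) * d) by (apply Rmult_lt_compat_r; lra). lra.
Qed.

Lemma rational_cover a b c (p q k : Z) t0 :
  0 < a -> 0 < b -> (0 < p)%Z -> (0 < q)%Z -> Z.gcd p q = 1%Z ->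
  a / b = IZR p / IZR q -> c = IZR k * (b / IZR q) -> S_abc a b c t0 ->
  forall y, exists t m n, S_abc a b c t /\ y = t + a * IZR m + b * IZR n.
Proof.
  intros Ha Hb Hp Hq Hg Hab Hc [x [H0 H]] y.
  assert (Hq' : 0 < IZR q) by (apply IZR_lt; lia).
  set (d := b / IZR q).
  assert (Hd : 0 < d) by (unfold d; apply Rdiv_lt_0_compat; lra).
  assert (Ea : a = IZR p * d).
  { unfold d. apply (f_equal (fun r => r * b)) in Hab. field_simplify in Hab; [|lra|lra].
    rewrite Hab. field. lra. }
  assert (Eb : b = IZR q * d) by (unfold d; field; lra).
  set (w := (Int_part (y / d) - Int_part (t0 / d))%Z).
  set (t := y - IZR w * d).
  assert (Ht : Int_part (t / d) = Int_part (t0 / d)).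
  { unfold t. replace ((y - IZR w * d) / d) with (y / d - IZR w) by (field; lra).
    rewrite ip_shift. unfold w. lia. }
  destruct (Z.gcd_bezout p q 1 Hg) as [u [v Huv]].
  exists t, (w * u)%Z, (w * v)%Z. split.
  - exists x. split; auto. intro m.
    assert (E : forall t' n, t' - a * IZR m + b * IZR n = t' - d * IZR (p * m - q * n)).
    { intros. rewrite minus_IZR, !mult_IZR, Ea, Eb. ring. }
    assert (Eq : forall n, in_co c (t - a * IZR m + b * IZR n) <-> in_co c (t0 - a * IZR m + b * IZR n)).
    { intro n. rewrite !E, Hc. fold d. rewrite !inco_cell by exact Hd. rewrite Ht. tauto. }
    destruct (H m) as [n [[Hx Hi] Hu]]. exists n. split; [split|].
    + auto.
    + apply Eq; auto.
    + intros n' Hx' Hi'. apply Hu; auto. apply Eq; auto.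
  - unfold t. rewrite !mult_IZR, Ea, Eb.
    assert (E1 : IZR u * IZR p + IZR v * IZR q = 1).
    { rewrite <- !mult_IZR, <- plus_IZR, Huv. reflexivity. }
    transitivity (y - IZR w * d + IZR w * d * (IZR u * IZR p + IZR v * IZR q)).
    + rewrite E1. ring.
    + ring.
Qed.



Definition Gset (a b r : R) : Prop := exists m n : Z, r = a * IZR m + b * IZR n.

Lemma Gsub a b r s : Gset a b r -> Gset a b s -> Gset a b (r - s).
Proof. intros [m [n ->]] [m' [n' ->]]. exists (m - m')%Z, (n - n')%Z. rewrite !minus_IZR. ring. Qed.

Lemma Gmul a b r k : Gset a b r -> Gset a b (IZR k * r).
Proof. intros [m [n ->]]. exists (k * m)%Z, (k * n)%Z. rewrite !mult_IZR. ring. Qed.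

Lemma small_G a b : 0 < a -> 0 < b -> (~ exists p q : Z, (q <> 0)%Z /\ a / b = IZR p / IZR q) ->
  forall eta, 0 < eta -> exists g, Gset a b g /\ 0 < g < eta.
Proof.
  intros Ha Hb Hirr.
  set (E := fun r => exists g, Gset a b g /\ 0 < g /\ r = - g).
  assert (HB : bound E) by (exists 0; intros r [g [_ [Hg ->]]]; lra).
  assert (HE : exists r, E r) by (exists (-b); exists b; split; [exists 0%Z, 1%Z; ring| split; [lra|ring]]).
  destruct (completeness E HB HE) as [l [Hub Hlub]].
  assert (Hlow : forall g, Gset a b g -> 0 < g -> - l <= g).
  { intros g Hg Hp. assert (- g <= l) by (apply Hub; exists g; auto). lra. }
  assert (Hl0 : l <= 0) by (apply Hlub; intros r [g [_ [Hg ->]]]; lra).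
  assert (Happ : forall eta, 0 < eta -> exists g, Gset a b g /\ 0 < g < - l + eta).
  { intros eta He. apply NNPP. intro Hn.
    assert (l <= l - eta); [|lra].
    apply Hlub. intros r [g [Hg [Hp ->]]].
    destruct (Rlt_or_le g (- l + eta)) as [Hlt|Hle].
    - exfalso. apply Hn. exists g. auto.
    - lra. }
  destruct (Rle_or_lt (- l) 0) as [Hd|Hd].
  - intros eta He. destruct (Happ eta He) as [g [Hg Hr]]. exists g. split; auto. lra.
  - exfalso. destruct (Happ (- l) Hd) as [g1 [Hg1 [Hp1 Hlt1]]].
    assert (Hmult : forall g, Gset a b g -> exists k : Z, g = IZR k * g1).
    { intros g Hg. exists (Int_part (g / g1)).
      destruct (ip_spec (g / g1)) as [A B].
      set (k := Int_part (g / g1)) in *.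
      assert (Hr : Gset a b (g - IZR k * g1)) by (apply Gsub; auto; apply Gmul; auto).
      assert (E1 : g = (g / g1) * g1) by (field; lra).
      assert (R0 : 0 <= g - IZR k * g1).
      { assert (IZR k * g1 <= (g/g1) * g1) by (apply Rmult_le_compat_r; lra). lra. }
      assert (R1 : g - IZR k * g1 < g1).
      { assert ((g/g1) * g1 < (IZR k + 1) * g1) by (apply Rmult_lt_compat_r; lra). lra. }
      destruct (Req_dec (g - IZR k * g1) 0) as [Hz|Hz]; [lra|].
      exfalso.
      assert (Hpos : 0 < g - IZR k * g1) by lra.
      pose proof (Hlow _ Hr Hpos).
      assert (Hr2 : Gset a b (g1 - (g - IZR k * g1))) by (apply Gsub; auto).
      assert (Hpos2 : 0 < g1 - (g - IZR k * g1)) by lra.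
      pose proof (Hlow _ Hr2 Hpos2). lra. }
    destruct (Hmult a) as [ka Hka]; [exists 1%Z, 0%Z; ring|].
    destruct (Hmult b) as [kb Hkb]; [exists 0%Z, 1%Z; ring|].
    apply Hirr. exists ka, kb. split.
    + intro Hz. subst kb. rewrite Rmult_0_l in Hkb. lra.
    + assert (IZR kb <> 0) by (intro Hz; rewrite Hz in Hkb; lra).
      rewrite Hka, Hkb. field. split; lra.
Qed.

Lemma density a b : 0 < a -> 0 < b -> (~ exists p q : Z, (q <> 0)%Z /\ a / b = IZR p / IZR q) ->
  forall y eps, 0 < eps -> exists m n : Z, y < a * IZR m + b * IZR n < y + eps.
Proof.
  intros Ha Hb Hirr y eps He.
  destruct (small_G a b Ha Hb Hirr eps He) as [g [Hg [Hg0 Hge]]].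
  destruct (Gmul a b g (Int_part (y / g) + 1) Hg) as [m [n Hmn]].
  exists m, n. rewrite <- Hmn. rewrite plus_IZR.
  destruct (ip_spec (y / g)) as [A B].
  assert (E1 : y = (y / g) * g) by (field; lra).
  assert (IZR (Int_part (y / g)) * g <= (y/g) * g) by (apply Rmult_le_compat_r; lra).
  assert ((y/g) * g < (IZR (Int_part (y / g)) + 1) * g) by (apply Rmult_lt_compat_r; lra).
  lra.
Qed.

Local Close Scope R_scope.

Definition inf_often (P : nat -> Prop) := forall K, exists k, (K <= k)%nat /\ P k.


Definition choose (f : nat -> Z -> bool) (P : nat -> Prop) (i : Z) : bool :=
  if excluded_middle_informative (inf_often (fun k => P k /\ f k i = true)) then true else false.

Definition refine (f : nat -> Z -> bool) (P : nat -> Prop) (i : Z) : nat -> Prop :=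
  fun k => P k /\ f k i = choose f P i.

Lemma inf_refine f P i : inf_often P -> inf_often (refine f P i).
Proof.
  intros HP. unfold refine, choose.
  destruct (excluded_middle_informative _) as [Hi|Hn]; [exact Hi|].
  assert (HK : exists K1, forall k, (K1 <= k)%nat -> ~ (P k /\ f k i = true)).
  { apply NNPP. intro Hc. apply Hn. intro K.
    apply NNPP. intro Hc2. apply Hc. exists K. intros k Hk Hpk.
    apply Hc2. exists k. auto. }
  destruct HK as [K1 HK1]. intro K.
  destruct (HP (Nat.max K K1)) as [k [Hk Hpk]].
  exists k. split; [lia|]. split; auto.
  destruct (f k i) eqn:E; auto. exfalso. apply (HK1 k); [lia|]. auto.
Qed.

Fixpoint A (f : nat -> Z -> bool) (j : nat) : nat -> Prop :=
  match j with
  | O => fun _ => True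
  | S j' => refine f (refine f (A f j') (Z.of_nat j')) (- Z.of_nat (S j'))
  end.

Lemma A_inf f j : inf_often (A f j).
Proof.
  induction j; simpl.
  - intro K. exists K. auto.
  - apply inf_refine, inf_refine, IHj.
Qed.

Definition g (f : nat -> Z -> bool) (n : Z) : bool :=
  if Z_le_dec 0 n then choose f (A f (Z.to_nat n)) n
  else choose f (refine f (A f (Z.to_nat (- n) - 1)) (Z.of_nat (Z.to_nat (- n) - 1))) n.

Lemma A_agree f j k : A f j k -> forall n, (- Z.of_nat j <= n < Z.of_nat j)%Z -> f k n = g f n.
Proof.
  revert k. induction j; intros k Hk n Hn.
  - simpl in Hn. lia.
  - destruct Hk as [[Hk1 Hk2] Hk3].
    destruct (Z.eq_dec n (Z.of_nat j)) as [->|Hne1].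
    + rewrite Hk2. unfold g. destruct (Z_le_dec 0 (Z.of_nat j)); [|lia].
      rewrite Nat2Z.id. reflexivity.
    + destruct (Z.eq_dec n (- Z.of_nat (S j))) as [->|Hne2].
      * rewrite Hk3. unfold g. destruct (Z_le_dec 0 (- Z.of_nat (S j))); [lia|].
        replace (Z.to_nat (- - Z.of_nat (S j)) - 1)%nat with j by lia. reflexivity.
      * apply IHj; auto. lia.
Qed.

Lemma compact_main f : forall R K : nat, exists k, (K <= k)%nat /\
  forall n, (- Z.of_nat R <= n < Z.of_nat R)%Z -> f k n = g f n.
Proof.
  intros R K. destruct (A_inf f R K) as [k [Hk HA]]. exists k. split; auto.
  apply A_agree; auto.
Qed.

Lemma compact_seq (f : nat -> Z -> bool) : exists g : Z -> bool, forall R K : nat, exists k, (K <= k)%nat /\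
  forall n, (- Z.of_nat R <= n < Z.of_nat R)%Z -> f k n = g n.
Proof. exists (g f). apply (compact_main f). Qed.

Local Open Scope R_scope.


Lemma below_int (w : R) : exists n0 : Z, IZR n0 < w <= IZR n0 + 1.
Proof.
  destruct (ip_spec (- w)) as [A B]. exists (- Int_part (- w) - 1)%Z.
  rewrite minus_IZR, opp_IZR. lra.
Qed.

Lemma window a b c t0 m : 0 < b -> 0 < c -> exists delta, 0 < delta /\ exists lo hi : Z,
  forall t, t0 <= t < t0 + delta -> forall n,
    in_co c (t - a * IZR m + b * IZR n) <-> (lo <= n <= hi)%Z.
Proof.
  intros Hb Hc.
  set (w := (a * IZR m - t0) / b).
  destruct (below_int w) as [n0 [A0 B0]].
  destruct (below_int (w + c / b)) as [n1 [A1 B1]].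
  assert (Ew : a * IZR m - t0 = b * w) by (unfold w; field; lra).
  assert (Ec : c = b * (c / b)) by (field; lra).
  set (cb := c / b) in *.
  exists (Rmin (b * (w - IZR n0)) (b * (w + cb - IZR n1))). split.
  { apply Rmin_glb_lt; apply Rmult_lt_0_compat; lra. }
  exists (n0 + 1)%Z, n1. intros t [Ht1 Ht2] n.
  pose proof (Rmin_l (b * (w - IZR n0)) (b * (w + cb - IZR n1))) as M1.
  pose proof (Rmin_r (b * (w - IZR n0)) (b * (w + cb - IZR n1))) as M2.
  assert (Eval : t - a * IZR m + b * IZR n = b * (IZR n - w) + (t - t0)) by lra.
  rewrite Eval. unfold in_co. split.
  - intros [C D]. split.
    + destruct (Z_le_gt_dec (n0 + 1) n) as [|Hlt]; auto. exfalso.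
      assert (IZR n <= IZR n0) by (apply IZR_le; lia).
      assert (b * (IZR n - w) <= b * (IZR n0 - w)) by (apply Rmult_le_compat_l; lra).
      lra.
    + destruct (Z_le_gt_dec n n1) as [|Hlt]; auto. exfalso.
      assert (IZR n1 + 1 <= IZR n) by (rewrite <- plus_IZR; apply IZR_le; lia).
      assert (b * (w + cb - w) <= b * (IZR n - w)) by (apply Rmult_le_compat_l; lra).
      lra.
  - intros [C D].
    assert (IZR n0 + 1 <= IZR n) by (rewrite <- plus_IZR; apply IZR_le; lia).
    assert (IZR n <= IZR n1) by (apply IZR_le; lia).
    assert (b * (IZR n0 + 1 - w) <= b * (IZR n - w)) by (apply Rmult_le_compat_l; lra).
    assert (b * (IZR n - w) <= b * (IZR n1 - w)) by (apply Rmult_le_compat_l; lra).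
    assert (0 <= b * (IZR n0 + 1 - w)) by (apply Rmult_le_pos; lra).
    split; lra.
Qed.

Lemma right_closed a b c ts : 0 < b -> 0 < c ->
  (forall eps, 0 < eps -> exists t, S_abc a b c t /\ ts < t < ts + eps) -> S_abc a b c ts.
Proof.
  intros Hb Hc H.
  assert (Hseq : forall k : nat, exists p : R * (Z -> bool),
    ts < fst p < ts + / (INR k + 1) /\ in_B0 (snd p) /\ Mx_eq_one a b c (fst p) (snd p)).
  { intro k. assert (0 < / (INR k + 1)) by (apply Rinv_0_lt_compat; pose proof (pos_INR k); lra).
    destruct (H _ H0) as [t [[x [Hx0 Hx]] Ht]]. exists (t, x). simpl. auto. }
  set (F := fun k => proj1_sig (constructive_indefinite_description _ (Hseq k))).
  assert (HF : forall k, ts < fst (F k) < ts + / (INR k + 1) /\ in_B0 (snd (F k)) /\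
              Mx_eq_one a b c (fst (F k)) (snd (F k))).
  { intro k. unfold F. destruct (constructive_indefinite_description _ (Hseq k)). simpl. auto. }
  destruct (compact_seq (fun k => snd (F k))) as [g Hg].
  exists g. split.
  - destruct (Hg 1%nat 0%nat) as [k [_ Hk]].
    destruct (HF k) as [_ [H0 _]]. unfold in_B0 in *. rewrite <- Hk; [exact H0|]. simpl. lia.
  - intro m. destruct (window a b c ts m Hb Hc) as [delta [Hd [lo [hi Hw]]]].
    destruct (INR_unbounded (/ delta)) as [K HK].
    destruct (Hg (Z.to_nat (Z.abs lo + Z.abs hi + 1)) K) as [k [HkK Hk]].
    destruct (HF k) as [[Ht1 Ht2] [_ Hrow]].
    set (tk := fst (F k)) in *. set (xk := snd (F k)) in *.
    assert (Hclose : tk < ts + delta).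
    { assert (INR K <= INR k) by (apply le_INR; lia).
      assert (/ (INR k + 1) < delta); [|lra].
      assert (0 < INR k + 1) by (pose proof (pos_INR k); lra).
      assert (1 < delta * (INR k + 1)).
      { assert (delta * / delta = 1) by (field; lra).
        assert (delta * / delta < delta * (INR k + 1)) by (apply Rmult_lt_compat_l; lra). lra. }
      apply (Rmult_lt_reg_r (INR k + 1)); auto. rewrite Rinv_l; lra. }
    assert (Hwin : forall n, (lo <= n <= hi)%Z ->
      (- Z.of_nat (Z.to_nat (Z.abs lo + Z.abs hi + 1)) <= n < Z.of_nat (Z.to_nat (Z.abs lo + Z.abs hi + 1)))%Z).
    { intros n Hn. rewrite Z2Nat.id by lia. lia. }
    destruct (Hrow m) as [nk [[Hxk Hik] Huk]].
    assert (Hr1 : (lo <= nk <= hi)%Z) by (apply (Hw tk); [lra|auto]).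
    exists nk. split; [split|].
    + rewrite <- Hk by (apply Hwin; auto). exact Hxk.
    + apply (Hw ts); [lra|auto].
    + intros n' Hx' Hi'.
      assert (Hr' : (lo <= n' <= hi)%Z) by (apply (Hw ts); [lra|auto]).
      apply Huk.
      * rewrite Hk by (apply Hwin; auto). exact Hx'.
      * apply (Hw tk); [lra|auto].
Qed.

Lemma assemble a b c N :
  0 < a -> a < b -> b < c -> IZR N * b <= c < (IZR N + 1) * b -> c - IZR N * b < a ->
  (forall y, exists t m n, S_abc a b c t /\ y = t + a * IZR m + b * IZR n) ->
  forall y : R,
    (exists t : R, S_abc a b c t /\
       (exists (s : R) (j : Z), 0 <= s < (c - IZR N * b) + a - b /\ t = s + a * IZR j) /\
       y = t + IZR N * b)
    \/
    (exists k : Z, (0 <= k <= N - 1)%Z /\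
       exists t : R, S_abc a b c t /\ y = t + IZR k * b).
Proof.
  intros Ha Hab Hbc HN Hc0 Hcov y.
  destruct (Hcov y) as [t [m [n [[x [H0 H]] Hy]]]].
  destruct (step a b c N t x n Ha Hab Hbc HN Hc0 H0 H) as [n1 [Hx1 [Hr Hlast]]].
  assert (HS : S_abc a b c (t + b * IZR n1 + a * IZR m)).
  { apply S_shift_a. apply (S_shift_b a b c t x n1); auto. }
  destruct (Z.eq_dec (n - n1) N) as [HeN|HneN].
  - left. exists (t + b * IZR n1 + a * IZR m). split; auto.
    destruct (Hlast HeN) as [s [j [Hs Ej]]]. split.
    + exists s, (j + m)%Z. split; auto. rewrite plus_IZR, Rmult_plus_distr_l. lra.
    + assert (E : IZR n = IZR n1 + IZR N) by (rewrite <- plus_IZR; replace (n1 + N)%Z with n by lia; reflexivity).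
      rewrite Hy, E. ring.
  - right. exists (n - n1)%Z. split; [lia|].
    exists (t + b * IZR n1 + a * IZR m). split; auto.
    rewrite Hy, minus_IZR. ring.
Qed.

Lemma irr_cover a b c N t0 :
  0 < a -> a < b -> b < c -> IZR N * b <= c < (IZR N + 1) * b -> c - IZR N * b < a ->
  (~ exists p q : Z, (q <> 0)%Z /\ a / b = IZR p / IZR q) -> S_abc a b c t0 ->
  forall y, exists t m n, S_abc a b c t /\ y = t + a * IZR m + b * IZR n.
Proof.
  intros Ha Hab Hbc HN Hc0 Hirr [x0 [H00 H0]] y.
  assert (Hj : exists j : Z, (0 <= j <= N)%Z /\
     forall eps, 0 < eps -> exists t, S_abc a b c t /\ y - b * IZR j < t < y - b * IZR j + eps).
  { apply NNPP. intro Hn.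
    assert (Hn' : forall j : Z, (0 <= j <= N)%Z -> exists eps, 0 < eps /\
              forall t, S_abc a b c t -> ~ (y - b * IZR j < t < y - b * IZR j + eps)).
    { intros j Hjr. apply NNPP. intro Hc. apply Hn. exists j. split; auto.
      intros eps He. apply NNPP. intro Hc2. apply Hc. exists eps. split; auto.
      intros t Ht Hin. apply Hc2. exists t. auto. }
    assert (Hind : forall M : nat, exists eps, 0 < eps /\ forall j : Z, (0 <= j < Z.of_nat M)%Z ->
              (j <= N)%Z -> forall t, S_abc a b c t -> ~ (y - b * IZR j < t < y - b * IZR j + eps)).
    { induction M as [|M IH].
      - exists 1. split; [lra|]. intros j Hj. simpl in Hj. lia.
      - destruct IH as [e [He Hjs]].
        destruct (Z_le_gt_dec (Z.of_nat M) N) as [HMN|HMN].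
        + destruct (Hn' (Z.of_nat M)) as [e' [He' Hj']]; [lia|].
          exists (Rmin e e'). split; [apply Rmin_glb_lt; auto|].
          intros j Hjr HjN t Ht Hin.
          pose proof (Rmin_l e e'). pose proof (Rmin_r e e').
          destruct (Z.eq_dec j (Z.of_nat M)) as [->|Hne].
          * apply (Hj' t Ht). lra.
          * apply (Hjs j) with (t := t); auto; [lia|lra].
        + exists e. split; auto. intros j Hjr HjN. apply Hjs; auto. lia. }
    destruct (Hind (S (Z.to_nat N))) as [eps [He Heps]].
    destruct (density a b Ha (Rlt_trans _ _ _ Ha Hab) Hirr (y - t0) eps He) as [m [n Hmn]].
    destruct (step a b c N t0 x0 n Ha Hab Hbc HN Hc0 H00 H0) as [n1 [Hx1 [Hr _]]].
    assert (HS : S_abc a b c (t0 + b * IZR n1 + a * IZR m)).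
    { apply S_shift_a. apply (S_shift_b a b c t0 x0 n1); auto. }
    apply (Heps (n - n1)%Z) with (t := t0 + b * IZR n1 + a * IZR m); auto.
    + rewrite Nat2Z.inj_succ, Z2Nat.id by lia. lia.
    + lia.
    + rewrite minus_IZR. lra. }
  destruct Hj as [j [Hjr Hj]].
  exists (y - b * IZR j), 0%Z, j. split.
  - apply right_closed; auto; lra.
  - ring.
Qed.

Theorem theorem5p3 (a b c : R) :
  0 < a -> a < b -> b < c ->
  (2 <= floorR (c / b))%Z ->
  let N := floorR (c / b) in
  let c0 := c - IZR N * b in
  let c1 := c - c0 - IZR (floorR ((c - c0) / a)) * a in
  b - a < c0 -> c0 < a ->
  0 <= c1 -> c1 <= 2 * a - b ->
  (exists t : R, S_abc a b c t) ->
  ((~ exists p q : Z, (q <> 0)%Z /\ a / b = IZR p / IZR q) \/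
   (exists p q : Z, (0 < p)%Z /\ (0 < q)%Z /\ Z.gcd p q = 1%Z /\
      a / b = IZR p / IZR q /\ exists k : Z, c = IZR k * (b / IZR q))) ->
  forall y : R,
    (exists t : R, S_abc a b c t /\
       (exists (s : R) (j : Z), 0 <= s < c0 + a - b /\ t = s + a * IZR j) /\
       y = t + IZR N * b)
    \/
    (exists k : Z, (0 <= k <= N - 1)%Z /\
       exists t : R, S_abc a b c t /\ y = t + IZR k * b).
Proof.
  intros Ha Hab Hbc HN2. cbv zeta.
  intros Hc0a Hc0b Hc1a Hc1b [t0 Ht0] Hcase.
  set (N := floorR (c / b)) in *.
  assert (HN : IZR N * b <= c < (IZR N + 1) * b).
  { destruct (ip_spec (c / b)) as [A B]. fold (floorR (c / b)) in A, B. fold N in A, B.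
    assert (Ec : c = (c / b) * b) by (field; lra).
    split.
    - assert (IZR N * b <= (c/b) * b) by (apply Rmult_le_compat_r; lra). lra.
    - assert ((c/b) * b < (IZR N + 1) * b) by (apply Rmult_lt_compat_r; lra). lra. }
  apply assemble; auto.
  destruct Hcase as [Hirr | [p [q [Hp [Hq [Hg [Hab' [k Hk]]]]]]]].
  - apply (irr_cover a b c N t0); auto.
  - apply (rational_cover a b c p q k t0); auto. lra.
Qed.
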